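(* For every fixed $\varepsilon>0$ there is a constant $K_\varepsilon<\infty$ such that for all $n\ge3$, $$P\big(|X_n-\mu_n|\ge\varepsilon\mu_n\big)\le n^{-2\varepsilon\ln\ln n+K_\varepsilon}.$$ That is, $P(|X_n-\mu_n|\ge\varepsilon\mu_n)\le n^{-2\varepsilon\ln\ln n+O(1)}$.
   Context: Let $X_n$ be the number of comparisons used by randomized Quicksort (uniform random pivot) on $n$ distinct numbers. Equivalently, $X_0=0$ and $$X_n\stackrel{d}{=}X_{U_n-1}+X^*_{n-U_n}+n-1,$$ with $U_n$ uniform on $\{1,\dots,n\}$, $X_j^*\stackrel{d}{=}X_j$, all independent. $\mu_n:=\mathbf EX_n=2(n+1)H_n-4n$, where $H_n=\sum_{k=1}^n1/k$. *)

(* Defs.v *)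
From Stdlib Require Import Reals List Arith.
Import ListNotations.
Open Scope R_scope.

Fixpoint sum_lt (f : nat -> R) (m : nat) : R :=
  match m with
  | O => 0
  | S m' => sum_lt f m' + f m'
  end.

Definition harmonic (n : nat) : R := sum_lt (fun i => / INR (S i)) n.

Definition qs_mean (n : nat) : R := 2 * INR (S n) * harmonic n - 4 * INR n.

(* One step of the distributional recursion
   X_n = X_{U-1} + X*_{n-U} + n - 1, U uniform on {1..n}, all independent.
   Given ds = [p_0; ...; p_{n-1}] (pmfs of X_0..X_{n-1}), returns pmf of X_n:
   P(X_n = k) = (1/n) sum_{u=1}^n sum_{a+b = k-(n-1)} p_{u-1}(a) p_{n-u}(b). *)
Definition qs_step (ds : list (nat -> R)) (n k : nat) : R :=
  if Nat.ltb k (n - 1) then 0 else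
  let j := (k - (n - 1))%nat in
  / INR n * sum_lt (fun i =>
      sum_lt (fun a => nth i ds (fun _ => 0) a
                       * nth (n - 1 - i) ds (fun _ => 0) (j - a)%nat) (S j)) n.

Fixpoint qs_pmfs (n : nat) : list (nat -> R) :=
  match n with
  | O => [fun k => if Nat.eqb k 0 then 1 else 0]
  | S m => let ds := qs_pmfs m in ds ++ [qs_step ds (S m)]
  end.

Definition qs_pmf (n : nat) : nat -> R := nth n (qs_pmfs n) (fun _ => 0).

(* P(|X_n - mu_n| >= eps * mu_n).  X_n takes values in {0,...,n(n-1)/2}
   (at most C(n,2) comparisons), so summing k over 0..n*n covers the support. *)
Definition qs_tail (n : nat) (eps : R) : R :=
  sum_lt (fun k => if Rle_dec (eps * qs_mean n) (Rabs (INR k - qs_mean n))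
                   then qs_pmf n k else 0) (S (n * n)).

(* Main.v *)
Require Import Defs.
From Stdlib Require Import Reals Lra Lia Psatz List.
Import ListNotations.
Open Scope R_scope.


Lemma sum_lt_ext (f g : nat -> R) m :
  (forall i, (i < m)%nat -> f i = g i) -> sum_lt f m = sum_lt g m.
Proof. induction m; intros H; simpl; auto. rewrite IHm by (intros; apply H; lia). rewrite H by lia. reflexivity. Qed.

Lemma sum_lt_le (f g : nat -> R) m :
  (forall i, (i < m)%nat -> f i <= g i) -> sum_lt f m <= sum_lt g m.
Proof. induction m; intros H; simpl; [lra|]. assert (H1 := H m (Nat.lt_succ_diag_r m)).
 assert (sum_lt f m <= sum_lt g m) by (apply IHm; intros; apply H; lia). lra. Qed.

Lemma sum_lt_nonneg (f : nat -> R) m :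
  (forall i, (i < m)%nat -> 0 <= f i) -> 0 <= sum_lt f m.
Proof. intros H. replace 0 with (sum_lt (fun _ => 0) m). apply sum_lt_le; auto.
 induction m; simpl; auto. rewrite IHm; [lra|]. intros; apply H; lia. Qed.

Lemma sum_lt_plus (f g : nat -> R) m :
  sum_lt (fun i => f i + g i) m = sum_lt f m + sum_lt g m.
Proof. induction m; simpl; [lra|]. rewrite IHm. lra. Qed.

Lemma sum_lt_scal (c : R) (f : nat -> R) m :
  sum_lt (fun i => c * f i) m = c * sum_lt f m.
Proof. induction m; simpl; [lra|]. rewrite IHm. lra. Qed.

Lemma sum_lt_const (c : R) m : sum_lt (fun _ => c) m = INR m * c.
Proof. induction m; simpl sum_lt; [simpl; lra|]. rewrite IHm, S_INR. lra. Qed.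

Lemma sum_lt_shift (f : nat -> R) m :
  sum_lt f (S m) = f O + sum_lt (fun i => f (S i)) m.
Proof. induction m. simpl; lra. change (sum_lt f (S (S m))) with (sum_lt f (S m) + f (S m)).
 rewrite IHm. simpl. lra. Qed.

Lemma sum_lt_rev (f : nat -> R) m :
  sum_lt (fun i => f (m - 1 - i)%nat) m = sum_lt f m.
Proof. induction m. reflexivity.
 rewrite sum_lt_shift. change (sum_lt f (S m)) with (sum_lt f m + f m).
 replace (S m - 1 - 0)%nat with m by lia. rewrite <- IHm.
 rewrite (sum_lt_ext (fun i => f (S m - 1 - S i)%nat) (fun i => f (m - 1 - i)%nat)).
 lra. intros; f_equal; lia. Qed.

Lemma sum_lt_add (f : nat -> R) m J :
  sum_lt f (m + J) = sum_lt f m + sum_lt (fun j => f (m + j)%nat) J.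
Proof. induction J. rewrite Nat.add_0_r. simpl; lra.
 replace (m + S J)%nat with (S (m + J)) by lia. simpl. rewrite IHJ. lra. Qed.

Lemma sum_lt_mono_bound (f : nat -> R) m J :
  (forall i, 0 <= f i) -> (m <= J)%nat -> sum_lt f m <= sum_lt f J.
Proof. intros H HJ. replace J with (m + (J - m))%nat by lia. rewrite sum_lt_add.
 assert (0 <= sum_lt (fun j => f (m + j)%nat) (J - m)) by (apply sum_lt_nonneg; auto). lra. Qed.

Lemma sum_lt_swap (f : nat -> nat -> R) N J :
  sum_lt (fun j => sum_lt (fun i => f i j) N) J = sum_lt (fun i => sum_lt (fun j => f i j) J) N.
Proof. induction J. simpl. clear. induction N; simpl; lra.
 simpl. rewrite IHJ. rewrite <- sum_lt_plus. reflexivity. Qed.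

Lemma cauchy_eq (f g : nat -> R) J :
  sum_lt (fun j => sum_lt (fun a => f a * g (j - a)%nat) (S j)) J
  = sum_lt (fun a => f a * sum_lt g (J - a)) J.
Proof. induction J. reflexivity.
 change (sum_lt (fun j => sum_lt (fun a => f a * g (j - a)%nat) (S j)) (S J)) with
  (sum_lt (fun j => sum_lt (fun a => f a * g (j - a)%nat) (S j)) J + sum_lt (fun a => f a * g (J - a)%nat) (S J)).
 rewrite IHJ.
 change (sum_lt (fun a => f a * sum_lt g (S J - a)) (S J)) with
   (sum_lt (fun a => f a * sum_lt g (S J - a)) J + f J * sum_lt g (S J - J)).
 rewrite (sum_lt_ext (fun a => f a * sum_lt g (S J - a)) (fun a => f a * sum_lt g (J - a) + f a * g (J - a)%nat)).
 2:{ intros a Ha. replace (S J - a)%nat with (S (J - a)) by lia. simpl. lra. }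
 rewrite sum_lt_plus. change (sum_lt (fun a => f a * g (J - a)%nat) (S J)) with
   (sum_lt (fun a => f a * g (J - a)%nat) J + f J * g (J - J)%nat).
 replace (S J - J)%nat with 1%nat by lia. replace (J - J)%nat with 0%nat by lia. simpl. lra. Qed.

Lemma cauchy_le (f g : nat -> R) J :
  (forall i, 0 <= f i) -> (forall i, 0 <= g i) ->
  sum_lt (fun j => sum_lt (fun a => f a * g (j - a)%nat) (S j)) J
  <= sum_lt f J * sum_lt g J.
Proof. intros Hf Hg. rewrite cauchy_eq. rewrite Rmult_comm, <- sum_lt_scal.
 apply sum_lt_le. intros a Ha. rewrite Rmult_comm. apply Rmult_le_compat_r; auto.
 apply sum_lt_mono_bound; auto; lia. Qed.

Lemma exp_le_mono x y : x <= y -> exp x <= exp y.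
Proof. intros [H|H]. left; apply exp_increasing; auto. subst; lra. Qed.

Lemma ln_le_sub1 x : 0 < x -> ln x <= x - 1.
Proof. intros H. pose proof (exp_ineq1_le (ln x)). rewrite exp_ln in H0; lra. Qed.


Lemma len_pmfs n : length (qs_pmfs n) = S n.
Proof. induction n; simpl; auto. rewrite length_app, IHn. simpl. lia. Qed.

Lemma nth_pmfs n i : (i <= n)%nat -> nth i (qs_pmfs n) (fun _ => 0) = qs_pmf i.
Proof. induction n; intros H.
 - replace i with 0%nat by lia. reflexivity.
 - destruct (Nat.eq_dec i (S n)). subst. reflexivity.
   simpl. rewrite app_nth1 by (rewrite len_pmfs; lia). apply IHn; lia. Qed.

Lemma pmf_S m : qs_pmf (S m) = qs_step (qs_pmfs m) (S m).
Proof. unfold qs_pmf. simpl. pose proof (nth_middle (qs_pmfs m) [] (qs_step (qs_pmfs m) (S m)) (fun _ => 0)).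
 rewrite len_pmfs in H. exact H. Qed.

Lemma pmf_S_eq m k : (m <= k)%nat ->
  qs_pmf (S m) k = / INR (S m) * sum_lt (fun i => sum_lt (fun a =>
     qs_pmf i a * qs_pmf (m - i) (k - m - a)%nat) (S (k - m))) (S m).
Proof. intros H. rewrite pmf_S. unfold qs_step.
 replace (S m - 1)%nat with m by lia.
 destruct (Nat.ltb_spec k m). lia.
 f_equal. apply sum_lt_ext. intros i Hi. apply sum_lt_ext. intros a Ha.
 rewrite !nth_pmfs by lia. reflexivity. Qed.

Lemma pmf_S_lt m k : (k < m)%nat -> qs_pmf (S m) k = 0.
Proof. intros H. rewrite pmf_S. unfold qs_step. replace (S m - 1)%nat with m by lia.
 destruct (Nat.ltb_spec k m). reflexivity. lia. Qed.

Lemma pmf_nonneg n : forall k, 0 <= qs_pmf n k.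
Proof. induction n as [n IH] using (well_founded_induction Wf_nat.lt_wf). intros k.
 destruct n. unfold qs_pmf; simpl. case_eq (Nat.eqb k 0); intros; lra.
 destruct (Nat.lt_ge_cases k n). rewrite pmf_S_lt by lia; lra.
 rewrite pmf_S_eq by auto. apply Rmult_le_pos.
 left; apply Rinv_0_lt_compat; apply lt_0_INR; lia.
 apply sum_lt_nonneg; intros i Hi; apply sum_lt_nonneg; intros a Ha.
 apply Rmult_le_pos; apply IH; lia. Qed.

Definition mg (n : nat) (th : R) (B : nat) : R :=
  sum_lt (fun k => qs_pmf n k * exp (th * INR k)) B.

Lemma mg_nonneg n th B : 0 <= mg n th B.
Proof. apply sum_lt_nonneg; intros; apply Rmult_le_pos; [apply pmf_nonneg|left; apply exp_pos]. Qed.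

Lemma pmf_0 k : qs_pmf 0 k = if Nat.eqb k 0 then 1 else 0.
Proof. reflexivity. Qed.

Lemma mg_0 th B : mg 0 th B <= 1.
Proof. unfold mg. destruct B. simpl; lra.
 rewrite sum_lt_shift. rewrite pmf_0. simpl Nat.eqb. cbv iota.
 rewrite (sum_lt_ext _ (fun _ => 0)). rewrite sum_lt_const. rewrite Rmult_0_r.
 replace (th * INR 0) with 0 by (simpl; ring). rewrite exp_0. lra.
 intros i Hi. rewrite pmf_0. simpl Nat.eqb. cbv iota. lra. Qed.

Lemma mg_rec m th B :
  mg (S m) th B <= exp (th * INR m) * / INR (S m) *
     sum_lt (fun i => mg i th B * mg (m - i) th B) (S m).
Proof.
 unfold mg.
 set (F := fun k => qs_pmf (S m) k * exp (th * INR k)).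
 assert (HF : forall k, 0 <= F k) by (intros; unfold F; apply Rmult_le_pos; [apply pmf_nonneg|left; apply exp_pos]).
 apply Rle_trans with (sum_lt F (m + B)). apply sum_lt_mono_bound; auto; lia.
 rewrite sum_lt_add. rewrite (sum_lt_ext F (fun _ => 0)).
 2:{ intros; unfold F; rewrite pmf_S_lt by lia; lra. }
 rewrite sum_lt_const, Rmult_0_r, Rplus_0_l.
 rewrite (sum_lt_ext (fun j => F (m + j)%nat) (fun j => exp (th * INR m) * / INR (S m) *
     sum_lt (fun i => sum_lt (fun a => (qs_pmf i a * exp (th * INR a)) *
        (qs_pmf (m - i) (j - a)%nat * exp (th * INR (j - a)%nat))) (S j)) (S m))).
 2:{ intros j Hj. unfold F. rewrite pmf_S_eq by lia.
     replace (m + j - m)%nat with j by lia.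
     rewrite (sum_lt_ext (fun i => sum_lt (fun a => qs_pmf i a * exp (th * INR a) * (qs_pmf (m - i) (j - a)%nat * exp (th * INR (j - a)%nat))) (S j)) (fun i => exp (th * INR j) * sum_lt (fun a => qs_pmf i a * qs_pmf (m - i) (j - a)%nat) (S j))).
     2:{ intros i Hi. rewrite <- sum_lt_scal. apply sum_lt_ext; intros a Ha. cbv beta.
         rewrite minus_INR by lia.
         replace (th * INR j) with (th * INR a + th * (INR j - INR a)) by ring.
         rewrite !exp_plus. ring. }
     rewrite sum_lt_scal. rewrite plus_INR, Rmult_plus_distr_l, exp_plus. ring. }
 rewrite sum_lt_scal. apply Rmult_le_compat_l.
 apply Rmult_le_pos. left; apply exp_pos. left; apply Rinv_0_lt_compat; apply lt_0_INR; lia.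
 rewrite sum_lt_swap. apply sum_lt_le. intros i Hi.
 apply (cauchy_le (fun a => qs_pmf i a * exp (th * INR a)) (fun b => qs_pmf (m - i) b * exp (th * INR b)));
  intros; apply Rmult_le_pos; try apply pmf_nonneg; left; apply exp_pos.
Qed.


Notation mu := qs_mean.

Lemma H_S n : harmonic (S n) = harmonic n + / INR (S n).
Proof. reflexivity. Qed.

Lemma INR_S_pos n : 0 < INR (S n).
Proof. apply lt_0_INR; lia. Qed.

Lemma H_nonneg n : 0 <= harmonic n.
Proof. induction n. simpl; unfold harmonic; simpl; lra. rewrite H_S.
 pose proof (Rinv_0_lt_compat _ (INR_S_pos n)). lra. Qed.

Lemma H_mono p k : harmonic p <= harmonic (p + k).
Proof. induction k. rewrite Nat.add_0_r; lra. replace (p + S k)%nat with (S (p + k)) by lia.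
 rewrite H_S. pose proof (Rinv_0_lt_compat _ (INR_S_pos (p+k))). lra. Qed.

Lemma H_diff_up p k : (harmonic (p + k) - harmonic p) * INR (S p) <= INR k.
Proof. induction k. rewrite Nat.add_0_r. simpl; lra.
 replace (p + S k)%nat with (S (p + k)) by lia. rewrite H_S.
 assert (/ INR (S (p + k)) * INR (S p) <= 1).
 { rewrite S_INR, S_INR, plus_INR. pose proof (pos_INR p); pose proof (pos_INR k).
   apply Rmult_le_reg_l with (INR p + INR k + 1). lra.
   rewrite <- Rmult_assoc, Rinv_r, Rmult_1_l; lra. }
 assert (E: (harmonic (p + k) + / INR (S (p + k)) - harmonic p) * INR (S p) = (harmonic (p + k) - harmonic p) * INR (S p) + / INR (S (p + k)) * INR (S p)) by ring.
 rewrite E, (S_INR k). lra. Qed.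

Lemma H_ge_ln n : ln (INR (S n)) <= harmonic n.
Proof. induction n. simpl. unfold harmonic; simpl. rewrite ln_1. lra.
 rewrite H_S.
 assert (E : INR (S (S n)) = INR (S n) * (INR (S (S n)) / INR (S n))).
 { field. apply Rgt_not_eq, INR_S_pos. }
 rewrite E, ln_mult. 2: apply INR_S_pos. 2:{ apply Rdiv_lt_0_compat; apply INR_S_pos. }
 assert (ln (INR (S (S n)) / INR (S n)) <= / INR (S n)).
 { eapply Rle_trans. apply ln_le_sub1. apply Rdiv_lt_0_compat; apply INR_S_pos.
   right. rewrite (S_INR (S n)). field. apply Rgt_not_eq, INR_S_pos. }
 lra. Qed.

Lemma mu_S n : mu (S n) = mu n + 2 * harmonic (S n) - 2.
Proof. unfold qs_mean. rewrite H_S. rewrite !S_INR. field.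
 pose proof (pos_INR n). lra. Qed.

Lemma mu_0 : mu 0 = 0.
Proof. unfold qs_mean, harmonic; simpl. ring. Qed.

Lemma mu_1 : mu 1 = 0.
Proof. rewrite mu_S, mu_0. unfold harmonic; simpl. field. Qed.

Lemma mu_2 : mu 2 = 1.
Proof. rewrite mu_S, mu_1. unfold harmonic; simpl. field. Qed.

Definition Dm (p q : nat) := mu (p + q + 1) - mu p - mu q.

Lemma Dm_nonneg p q : 0 <= Dm p q.
Proof. induction q; unfold Dm in *.
 - rewrite Nat.add_0_r, Nat.add_1_r, mu_S, mu_0.
   pose proof (H_mono 1 p). replace (1 + p)%nat with (S p) in H by lia.
   assert (harmonic 1 = 1) by (unfold harmonic; simpl; field). lra.
 - replace (p + S q + 1)%nat with (S (p + q + 1)) by lia. rewrite !mu_S.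
   pose proof (H_mono (S q) (p + 1)). replace (S q + (p + 1))%nat with (S (p + q + 1)) in H by lia.
   lra. Qed.

Lemma Dm_le p q : Dm p q <= 2 * INR (p + q).
Proof. unfold Dm, qs_mean.
 pose proof (H_diff_up p (S q)). pose proof (H_diff_up q (S p)).
 replace (p + S q)%nat with (p + q + 1)%nat in H by lia.
 replace (q + S p)%nat with (p + q + 1)%nat in H0 by lia.
 rewrite !S_INR, !plus_INR in *. simpl INR in *. nra. Qed.

Lemma mu_sum n : INR n * mu n = INR n * (INR n - 1) + 2 * sum_lt mu n.
Proof. induction n. simpl. ring.
 change (sum_lt mu (S n)) with (sum_lt mu n + mu n).
 rewrite mu_S, H_S.
 assert (A1: INR (S n) * (mu n + 2 * (harmonic n + / INR (S n)) - 2) = INR (S n) * mu n + 2 * INR (S n) * harmonic n + 2 - 2 * INR (S n)).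
 { field. apply Rgt_not_eq, INR_S_pos. }
 assert (A2: mu n = 2 * INR (S n) * harmonic n - 4 * INR n) by reflexivity.
 rewrite A1. rewrite S_INR in *. nra. Qed.


Lemma exp_ge1 x : 0 <= x -> 1 <= exp x.
Proof. intros; pose proof (exp_ineq1_le x); lra. Qed.

Lemma exp_le_inv1 x : x < 1 -> exp x * (1 - x) <= 1.
Proof. intros H. pose proof (exp_ineq1_le (-x)). rewrite exp_Ropp in H0.
 pose proof (exp_pos x).
 assert (exp x * / exp x = 1) by (field; lra).
 nra. Qed.

Lemma exp_neg_le x : 0 <= x -> exp (- x) * (1 + x) <= 1.
Proof. intros H. rewrite exp_Ropp. pose proof (exp_ineq1_le x). pose proof (exp_pos x).
 assert (exp x * / exp x = 1) by (field; lra). pose proof (Rinv_0_lt_compat _ H1). nra. Qed.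

Lemma exp_quad y : -1/5 <= y <= 1/5 -> exp y <= 1 + y + y * y.
Proof. intros H. assert (E : exp y = exp (y/2) * exp (y/2)) by (rewrite <- exp_plus; f_equal; field).
 pose proof (exp_le_inv1 (y/2)). pose proof (exp_pos (y/2)).
 assert (Hz : exp (y/2) * (1 - y/2) <= 1) by (apply H0; lra).
 set (z := exp (y/2)) in *.
 rewrite E. assert (z * z * ((1 - y/2)*(1-y/2)) <= 1).
 { assert (0 <= z*(1-y/2)) by (apply Rmult_le_pos; lra).
   replace (z * z * ((1 - y/2)*(1-y/2))) with ((z*(1-y/2))*(z*(1-y/2))) by ring. nra. }
 assert (1 <= (1 + y + y*y) * ((1 - y/2)*(1-y/2))).
 { assert (0 <= y*y*(1 - 3*y + y*y)) by (apply Rmult_le_pos; nra).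
   replace ((1 + y + y*y) * ((1 - y/2)*(1-y/2))) with (1 + y*y*(1 - 3*y + y*y)/4) by field. lra. }
 destruct (Rle_dec (z*z) (1 + y + y*y)) as [h|h]; auto.
 assert (0 < (z*z - (1 + y + y*y)) * ((1 - y/2)*(1-y/2))) by (apply Rmult_lt_0_compat; nra).
 nra. Qed.

Lemma exp_sub1_le x : 0 <= x <= 1/10 -> exp x - 1 <= x / (9/10).
Proof. intros H. pose proof (exp_le_inv1 x). assert (exp x * (1-x) <= 1) by (apply H0; lra).
 apply Rmult_le_reg_r with (9/10). lra. unfold Rdiv. rewrite Rmult_assoc, Rinv_l by lra.
 pose proof (exp_ge1 x). nra. Qed.

Lemma one_minus_exp_neg x : 0 <= x -> x / (1 + x) <= 1 - exp (- x).
Proof. intros H. pose proof (exp_neg_le x H). apply Rmult_le_reg_r with (1 + x). lra.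
 unfold Rdiv. rewrite Rmult_assoc, Rinv_l by lra. nra. Qed.

Lemma e_ge2 : 2 <= exp 1.
Proof. pose proof (exp_ineq1_le 1). lra. Qed.

Lemma exp_m2 : exp (-2) <= 1/4.
Proof. replace (-2) with (- (1+1)) by ring. rewrite exp_Ropp, exp_plus. pose proof e_ge2.
 apply Rmult_le_reg_l with (exp 1 * exp 1). nra. rewrite Rinv_r by nra. nra. Qed.


Definition AA := 1000.
Definition wfun (s t a b : R) := AA * (exp t - exp a - exp b + 1 - s).

Lemma w_ge_w1 a b s : 0 <= a -> 0 <= b -> 0 <= s ->
  (exp a - 1) * (exp b - 1) <= exp (a + b + s) - exp a - exp b + 1 - s.
Proof. intros Ha Hb Hs. rewrite !exp_plus. pose proof (exp_ge1 a Ha). pose proof (exp_ge1 b Hb).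
 pose proof (exp_ineq1_le s). assert (1 <= exp a * exp b) by nra. nra. Qed.

Lemma w1_ge a b : 0 <= a -> 0 <= b -> a * b <= (exp a - 1) * (exp b - 1).
Proof. intros. pose proof (exp_ineq1_le a). pose proof (exp_ineq1_le b). nra. Qed.

Lemma w1_le a b : 0 <= a -> 0 <= b -> a + b <= 1/5 ->
  AA * ((exp a - 1) * (exp b - 1)) <= 14.
Proof. intros Ha Hb Hab.
 assert (E1 : exp a = exp (a/2) * exp (a/2)) by (rewrite <- exp_plus; f_equal; field).
 assert (E2 : exp b = exp (b/2) * exp (b/2)) by (rewrite <- exp_plus; f_equal; field).
 assert (E3 : exp ((a+b)/2) = exp (a/2) * exp (b/2)) by (rewrite <- exp_plus; f_equal; field).
 assert (H1 : (exp a - 1) * (exp b - 1) <= (exp ((a+b)/2) - 1) * (exp ((a+b)/2) - 1)).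
 { rewrite E1, E2, E3. set (x := exp (a/2)). set (y := exp (b/2)). pose proof (Rle_0_sqr (x-y)). unfold Rsqr in *. nra. }
 pose proof (exp_sub1_le ((a+b)/2)). pose proof (exp_ge1 ((a+b)/2)).
 assert (exp ((a+b)/2) - 1 <= (a+b)/2/(9/10)) by (apply H; lra).
 assert (0 <= exp ((a+b)/2) - 1) by (assert (1 <= exp ((a+b)/2)) by (apply H0; lra); lra).
 assert ((exp ((a+b)/2) - 1) * (exp ((a+b)/2) - 1) <= (1/9)*(1/9)).
 { assert ((a+b)/2/(9/10) <= 1/9) by (unfold Rdiv; lra). nra. }
 unfold AA. assert (0 <= (exp a - 1) * (exp b - 1)) by (apply Rmult_le_pos; [pose proof (exp_ge1 a Ha)|pose proof (exp_ge1 b Hb)]; lra).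
 nra. Qed.

Lemma sum_id n : sum_lt (fun i => INR i) n = INR n * (INR n - 1) / 2.
Proof. induction n. simpl; field. simpl sum_lt. rewrite IHn, S_INR. field. Qed.

Lemma sum_sq n : sum_lt (fun i => INR i * INR i) n = INR n * (INR n - 1) * (2 * INR n - 1) / 6.
Proof. induction n. simpl; field. simpl sum_lt. rewrite IHn, S_INR. field. Qed.

Lemma sum_prod m : sum_lt (fun i => INR i * INR (m - i)) (S m) = (INR m - 1) * INR m * (INR m + 1) / 6.
Proof. rewrite (sum_lt_ext _ (fun i => INR m * INR i + (-1) * (INR i * INR i))).
 rewrite sum_lt_plus, !sum_lt_scal, sum_id, sum_sq, S_INR. field.
 intros i Hi. rewrite minus_INR by lia. ring. Qed.

Lemma Rabs_le_inv' x b : Rabs x <= b -> - b <= x <= b.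
Proof. unfold Rabs; destruct (Rcase_abs x); lra. Qed.

Section Small.
Lemma small_regime (m : nat) (s : R) (y : nat -> R) :
  (2 <= m)%nat -> 0 <= s -> s * INR (S m) <= 1/5 ->
  (forall i, (i <= m)%nat -> Rabs (y i) <= s * INR (S m)) ->
  sum_lt y (S m) = 0 ->
  sum_lt (fun i => exp (y i - wfun s (s * INR (S m)) (s * INR i) (s * INR (m - i)))) (S m) <= INR (S m).
Proof.
 intros Hm Hs Ht Hy Hsum. set (t := s * INR (S m)) in *.
 assert (Hpt : forall i, (i <= m)%nat ->
   exp (y i - wfun s t (s * INR i) (s * INR (m - i))) <=
   1 + y i + t * t - (4/75) * AA * (s * INR i * (s * INR (m - i))) ).
 { intros i Hi. set (a := s * INR i). set (b := s * INR (m - i)).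
   assert (Ha : 0 <= a) by (apply Rmult_le_pos; auto; apply pos_INR).
   assert (Hb : 0 <= b) by (apply Rmult_le_pos; auto; apply pos_INR).
   assert (Htab : t = a + b + s).
   { unfold t, a, b. rewrite minus_INR by lia. rewrite S_INR. ring. }
   set (w1 := AA * ((exp a - 1) * (exp b - 1))).
   assert (Hw : w1 <= wfun s t a b).
   { unfold w1, wfun, AA. rewrite Htab. pose proof (w_ge_w1 a b s Ha Hb Hs). lra. }
   assert (Hw1u : w1 <= 14) by (apply w1_le; auto; lra).
   assert (Hw1l : AA * (a * b) <= w1) by (unfold w1, AA; pose proof (w1_ge a b Ha Hb); lra).
   assert (Hw10 : 0 <= AA * (a*b)) by (unfold AA; apply Rmult_le_pos; [lra| apply Rmult_le_pos; auto]).
   pose proof (Hy i Hi) as Hyi. apply Rabs_le_inv' in Hyi. fold t in Hyi.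
   assert (E : exp (y i - wfun s t a b) <= exp (y i) * exp (- w1)).
   { rewrite <- exp_plus. apply exp_le_mono. lra. }
   pose proof (exp_neg_le w1 ltac:(lra)).
   assert (Hew : exp (- w1) <= 1 - w1 / 15).
   { apply Rmult_le_reg_r with 15. lra. pose proof (exp_pos (-w1)).
     replace ((1 - w1/15) * 15) with (15 - w1) by field. nra. }
   assert (Hq : exp (y i) <= 1 + y i + y i * y i) by (apply exp_quad; lra).
   assert (Hl : 4/5 <= exp (y i)) by (pose proof (exp_ineq1_le (y i)); lra).
   assert (y i * y i <= t * t) by nra.
   assert (0 <= 1 - w1/15) by lra.
   assert (exp (y i) * exp (- w1) <= exp (y i) * (1 - w1/15)) by (apply Rmult_le_compat_l; [left; apply exp_pos| auto]).
   assert (exp (y i) * (w1/15) >= (4/5) * (w1/15)) by nra.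
   nra. }
 eapply Rle_trans. apply sum_lt_le. intros i Hi. apply Hpt. lia.
 rewrite (sum_lt_ext _ (fun i => (1 + t * t) + y i + (- (4/75) * AA * (s * s)) * (INR i * INR (m - i)))).
 2:{ intros; ring. }
 rewrite !sum_lt_plus, (sum_lt_scal (- (4/75)*AA*(s*s)) (fun i => INR i * INR (m - i))), sum_prod, Hsum, !sum_lt_const.
 unfold t. rewrite S_INR. unfold AA.
 assert (2 <= INR m) by (replace 2 with (INR 2) by (simpl; ring); apply le_INR; auto).
 assert (0 <= s * s) by nra.
 assert ((INR m + 1) * (INR m + 1) <= 8 * ((INR m - 1) * INR m)) by nra.
 assert (0 <= s * s * (8 * ((INR m - 1) * INR m) - (INR m + 1) * (INR m + 1))) by (apply Rmult_le_pos; lra).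
 nra. Qed.
End Small.


Lemma w_lower s t v : 0 <= s -> s <= v -> v <= 2 * t / 3 ->
  (1 - exp (- v)) * (exp t - exp (2 * t / 3)) <= exp t - exp (v - s) - exp (t - v) + 1 - s.
Proof. intros Hs Hsv Hv.
 assert (E1 : exp v = exp (v - s) * exp s) by (rewrite <- exp_plus; f_equal; ring).
 assert (E2 : exp t = exp (t - v) * exp v) by (rewrite <- exp_plus; f_equal; ring).
 assert (E3 : exp (- v) * exp v = 1) by (rewrite <- exp_plus; replace (-v+v) with 0 by ring; apply exp_0).
 pose proof (exp_ge1 (v - s) ltac:(lra)). pose proof (exp_ineq1_le s).
 assert (exp (v - s) + s <= exp v) by nra.
 assert (exp v <= exp (2 * t / 3)) by (apply exp_le_mono; auto).
 assert (0 <= 1 - exp (- v)).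
 { pose proof (exp_ge1 v ltac:(lra)). pose proof (exp_pos (-v)). nra. }
 assert ((1 - exp (- v)) * (exp t - exp (2 * t / 3)) <= (1 - exp (- v)) * (exp t - exp v)) by
   (apply Rmult_le_compat_l; lra).
 assert ((1 - exp (- v)) * (exp t - exp v) = exp t - exp (t - v) - exp v + 1).
 { rewrite E2. transitivity (exp (t-v) * exp v - exp v - exp (t-v) * (exp (-v) * exp v) + exp (-v) * exp v).
   ring. rewrite E3; ring. }
 lra. Qed.

Definition gfun (AG s : R) (k : nat) := exp (- AG * (1 - exp (- (s * INR (S k))))).

Lemma gfun_le AG s k : 0 <= AG -> 0 <= s ->
  gfun AG s k <= exp (- (AG * s / 2) * INR (S k)) + exp (- (AG / 2)).
Proof. intros HG Hs. unfold gfun. set (v := s * INR (S k)).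
 assert (0 <= v) by (apply Rmult_le_pos; auto; apply pos_INR).
 pose proof (one_minus_exp_neg v H).
 destruct (Rle_dec v 1).
 - assert (v / 2 <= 1 - exp (- v)).
   { apply Rle_trans with (v / (1 + v)); auto. unfold Rdiv. apply Rmult_le_compat_l; auto.
     apply Rinv_le_contravar; lra. }
   assert (exp (- AG * (1 - exp (- v))) <= exp (- (AG * s / 2) * INR (S k))).
   { apply exp_le_mono. replace (- (AG * s / 2) * INR (S k)) with (- (AG * (v / 2))) by (unfold v; field).
     assert (AG * (v/2) <= AG * (1 - exp (- v))) by (apply Rmult_le_compat_l; auto). lra. }
   pose proof (exp_pos (- (AG/2))). lra.
 - assert (1/2 <= 1 - exp (- v)).
   { apply Rle_trans with (v / (1 + v)); auto. apply Rmult_le_reg_r with (1 + v). lra.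
     replace (v/(1+v)*(1+v)) with v by (field; lra). lra. }
   assert (exp (- AG * (1 - exp (- v))) <= exp (- (AG / 2))) by (apply exp_le_mono; assert (AG * (1/2) <= AG * (1 - exp (- v))) by (apply Rmult_le_compat_l; auto); lra).
   pose proof (exp_pos (- (AG * s / 2) * INR (S k))). lra. Qed.

Lemma geo q N : 0 < q -> q * sum_lt (fun k => exp (- q * INR (S k))) N <= 1 - exp (- q * INR N).
Proof. intros Hq. induction N. simpl sum_lt. replace (- q * INR 0) with 0 by (simpl; ring). rewrite exp_0. lra.
 change (sum_lt (fun k => exp (- q * INR (S k))) (S N)) with
   (sum_lt (fun k => exp (- q * INR (S k))) N + exp (- q * INR (S N))).
 assert (E : exp (- q * INR N) = exp (- q * INR (S N)) * exp q).
 { rewrite <- exp_plus. f_equal. rewrite S_INR. ring. }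
 pose proof (exp_ineq1_le q). pose proof (exp_pos (- q * INR (S N))). nra. Qed.

Lemma geo' q N : 0 < q -> sum_lt (fun k => exp (- q * INR (S k))) N <= / q.
Proof. intros Hq. pose proof (geo q N Hq). pose proof (exp_pos (- q * INR N)).
 apply Rmult_le_reg_l with q; auto. rewrite Rinv_r by lra. lra. Qed.

Lemma large_regime (m : nat) (s : R) (y : nat -> R) :
  (2 <= m)%nat -> 0 < s -> 1/5 <= s * INR (S m) ->
  (forall i, (i <= m)%nat -> y i <= s * INR (S m)) ->
  sum_lt (fun i => exp (y i - wfun s (s * INR (S m)) (s * INR i) (s * INR (m - i)))) (S m) <= INR (S m).
Proof.
 intros Hm Hs Ht Hy. set (t := s * INR (S m)) in *.
 set (F := 1 - exp (- (t/3))).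
 assert (HF' : t / (3 + t) <= F).
 { pose proof (one_minus_exp_neg (t/3) ltac:(lra)). unfold F.
   eapply Rle_trans; [|exact H]. apply Req_le. field. lra. }
 assert (HtF : t * t / (3 + t) <= t * F).
 { replace (t * t / (3 + t)) with (t * (t / (3 + t))) by (field; lra). apply Rmult_le_compat_l; lra. }
 set (E := exp t).
 assert (HE : 1 + t <= E) by (apply exp_ineq1_le).
 assert (HG : exp t - exp (2 * t / 3) = E * F).
 { unfold E, F. replace (2 * t / 3) with (t + - (t/3)) by field. rewrite exp_plus. ring. }
 set (AG := AA * (E * F)).
 assert (HFpos : 0 < F) by (assert (0 < t/(3+t)) by (apply Rdiv_lt_0_compat; lra); lra).
 assert (HAG : 0 < AG) by (unfold AG, AA; apply Rmult_lt_0_compat; [lra| apply Rmult_lt_0_compat; lra]).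
 assert (Hpt : forall i, (i <= m)%nat ->
   exp (y i - wfun s t (s * INR i) (s * INR (m - i))) <= E * (gfun AG s i + gfun AG s (m - i))).
 { intros i Hi. pose proof (Hy i Hi) as Hyi.
   assert (Hg0 : forall k, 0 <= gfun AG s k) by (intros; left; apply exp_pos).
   assert (key : forall v, s <= v -> v <= 2 * t / 3 ->
      exp (y i - AA * (exp t - exp (v - s) - exp (t - v) + 1 - s)) <= E * exp (- AG * (1 - exp (- v)))).
   { intros v H1 H2. pose proof (w_lower s t v ltac:(lra) H1 H2). rewrite HG in H.
     unfold E. rewrite <- exp_plus. apply exp_le_mono. unfold AG, AA in *.
     assert (1000 * ((1 - exp (- v)) * (E * F)) <= 1000 * (exp t - exp (v - s) - exp (t - v) + 1 - s)) by lra.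
     nra. }
   assert (Hmi : INR (m - i) = INR m - INR i) by (apply minus_INR; auto).
   destruct (Nat.le_gt_cases (2 * i) m) as [Hc|Hc].
   - assert (Hv : 3 * INR (S i) <= 2 * INR (S m)).
     { replace 3 with (INR 3) by (simpl; ring). replace 2 with (INR 2) by (simpl; ring).
       rewrite <- !mult_INR. apply le_INR. lia. }
     pose proof (key (s * INR (S i))) as K.
     unfold wfun. replace (s * INR i) with (s * INR (S i) - s) by (rewrite S_INR; ring).
     replace (s * INR (m - i)) with (t - s * INR (S i)) by (unfold t; rewrite Hmi, !S_INR; ring).
     eapply Rle_trans. apply K. rewrite S_INR. pose proof (pos_INR i). nra.
     unfold t. nra.
     unfold gfun. pose proof (Hg0 (m - i)%nat). unfold gfun in H. nra.
   - assert (Hv : 3 * INR (S (m - i)) <= 2 * INR (S m)).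
     { replace 3 with (INR 3) by (simpl; ring). replace 2 with (INR 2) by (simpl; ring).
       rewrite <- !mult_INR. apply le_INR. lia. }
     pose proof (key (s * INR (S (m - i)))) as K.
     unfold wfun. replace (s * INR (m - i)) with (s * INR (S (m - i)) - s) by (rewrite S_INR; ring).
     replace (s * INR i) with (t - s * INR (S (m - i))) by (unfold t; rewrite !S_INR, Hmi; ring).
     replace (exp t - exp (t - s * INR (S (m - i))) - exp (s * INR (S (m - i)) - s) + 1 - s)
       with (exp t - exp (s * INR (S (m - i)) - s) - exp (t - s * INR (S (m - i))) + 1 - s) by ring.
     eapply Rle_trans. apply K. rewrite S_INR. pose proof (pos_INR (m - i)). nra.
     unfold t. nra.
     unfold gfun. pose proof (Hg0 i). unfold gfun in H. nra. }
 eapply Rle_trans. apply sum_lt_le. intros i Hi. apply Hpt. lia.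
 rewrite sum_lt_scal, sum_lt_plus.
 rewrite (sum_lt_ext (fun i => gfun AG s (m - i)) (fun i => gfun AG s (S m - 1 - i))) by (intros; f_equal; lia).
 rewrite (sum_lt_rev (gfun AG s)).
 set (q := AG * s / 2).
 assert (Hq : 0 < q) by (unfold q; apply Rdiv_lt_0_compat; [apply Rmult_lt_0_compat|]; lra).
 assert (Hsg : sum_lt (gfun AG s) (S m) <= / q + INR (S m) * exp (- (AG / 2))).
 { eapply Rle_trans. apply sum_lt_le. intros i Hi. apply gfun_le; lra.
   rewrite sum_lt_plus, sum_lt_const.
   pose proof (geo' q (S m) Hq). unfold q in *. lra. }
 assert (Hn : INR (S m) * s = t) by (unfold t; ring).
 assert (Hnpos : 0 < INR (S m)) by (apply lt_0_INR; lia).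
 assert (H1 : E * / q <= INR (S m) / 4).
 { unfold q, AG. apply Rmult_le_reg_l with q; auto. unfold q, AG.
   replace (AA * (E * F) * s / 2 * (E * / (AA * (E * F) * s / 2))) with E by (field; unfold AA; repeat split; lra).
   unfold AA. replace (1000 * (E * F) * s / 2 * (INR (S m) / 4)) with (125 * E * (F * t)) by (rewrite <- Hn; field).
   assert (8 <= 1000 * (t * F)).
   { apply Rle_trans with (1000 * (t * t / (3 + t))).
     apply Rmult_le_reg_r with (3 + t). lra. replace (1000 * (t * t / (3 + t)) * (3 + t)) with (1000 * (t * t)) by (field; lra). nra.
     lra. }
   nra. }
 assert (H2 : E * exp (- (AG / 2)) <= 1/4).
 { unfold E. rewrite <- exp_plus. eapply Rle_trans; [|apply exp_m2]. apply exp_le_mono.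
   unfold AG, AA.
   assert (t + 2 <= 500 * (1 + t) * (t / (3 + t))).
   { apply Rmult_le_reg_r with (3 + t). lra. replace (500 * (1 + t) * (t / (3 + t)) * (3 + t)) with (500 * (1+t) * t) by (field; lra). nra. }
   assert (500 * (1 + t) * (t / (3 + t)) <= 500 * (E * F)).
   { assert (0 <= t / (3+t)) by (left; apply Rdiv_lt_0_compat; lra). nra. }
   lra. }
 pose proof (exp_pos (- (AG / 2))).
 assert (E * (sum_lt (gfun AG s) (S m) + sum_lt (gfun AG s) (S m)) <= 2 * (E * / q) + 2 * INR (S m) * (E * exp (- (AG / 2)))).
 { assert (0 < E) by (unfold E; apply exp_pos). nra. }
 nra. Qed.


Definition Cc (m i : nat) := INR m + mu i + mu (m - i) - mu (S m).
Definition phi (x : R) := AA * (exp x - 1 - x).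

Lemma Cc_bounds m i : (i <= m)%nat -> - INR m <= Cc m i <= INR m.
Proof. intros H. pose proof (Dm_nonneg i (m - i)). pose proof (Dm_le i (m - i)).
 unfold Dm in *. replace (i + (m - i) + 1)%nat with (S m) in * by lia.
 replace (i + (m - i))%nat with m in * by lia. unfold Cc. lra. Qed.

Lemma Cc_sum m : sum_lt (Cc m) (S m) = 0.
Proof. unfold Cc.
 rewrite (sum_lt_ext _ (fun i => (INR m - mu (S m)) + (mu i + mu (S m - 1 - i)%nat))).
 2:{ intros i Hi. replace (S m - 1 - i)%nat with (m - i)%nat by lia. ring. }
 rewrite sum_lt_plus, sum_lt_const, sum_lt_plus, (sum_lt_rev mu).
 pose proof (mu_sum (S m)). rewrite S_INR in *. nra. Qed.

Lemma wfun_nonneg s a b : 0 <= s -> 0 <= a -> 0 <= b -> 0 <= wfun s (a + b + s) a b.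
Proof. intros. pose proof (w_ge_w1 a b s H0 H1 H). pose proof (exp_ge1 a H0). pose proof (exp_ge1 b H1).
 unfold wfun, AA. assert (0 <= (exp a - 1) * (exp b - 1)) by (apply Rmult_le_pos; lra). lra. Qed.

Lemma core m th :
  sum_lt (fun i => exp (th * Cc m i + phi (Rabs th * INR i) + phi (Rabs th * INR (m - i))
                        - phi (Rabs th * INR (S m)))) (S m) <= INR (S m).
Proof.
 set (s := Rabs th). assert (Hs : 0 <= s) by apply Rabs_pos.
 set (t := s * INR (S m)).
 rewrite (sum_lt_ext _ (fun i => exp (th * Cc m i - wfun s t (s * INR i) (s * INR (m - i))))).
 2:{ intros i Hi. f_equal. unfold phi, wfun, t. rewrite minus_INR by lia. rewrite S_INR. ring. }
 assert (Ht : forall i, (i <= m)%nat -> t = s * INR i + s * INR (m - i) + s).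
 { intros. unfold t. rewrite minus_INR, S_INR by lia. ring. }
 destruct (Nat.lt_ge_cases m 2) as [Hm|Hm].
 -
   assert (HC : forall i, (i <= m)%nat -> Cc m i = 0).
   { intros i Hi. unfold Cc. destruct m as [|[|]]; try lia.
     + replace i with 0%nat by lia. simpl. rewrite mu_0, mu_1. ring.
     + destruct i as [|[|]]; try lia; simpl; rewrite ?mu_0, ?mu_1, ?mu_2; simpl; ring. }
   apply Rle_trans with (sum_lt (fun _ => 1) (S m)).
   apply sum_lt_le. intros i Hi. rewrite (HC i) by lia. rewrite (Ht i) by lia.
   rewrite <- exp_0. apply exp_le_mono.
   pose proof (wfun_nonneg s (s * INR i) (s * INR (m - i)) Hs
     ltac:(apply Rmult_le_pos; auto; apply pos_INR) ltac:(apply Rmult_le_pos; auto; apply pos_INR)). lra.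
   rewrite sum_lt_const. lra.
 - assert (Hy : forall i, (i <= m)%nat -> Rabs (th * Cc m i) <= t).
   { intros i Hi. rewrite Rabs_mult. fold s. pose proof (Cc_bounds m i Hi).
     assert (Rabs (Cc m i) <= INR m) by (apply Rabs_le; lra).
     unfold t. rewrite S_INR. pose proof (Rabs_pos (Cc m i)). nra. }
   assert (Hsum : sum_lt (fun i => th * Cc m i) (S m) = 0) by (rewrite sum_lt_scal, Cc_sum; ring).
   destruct (Rle_dec t (1/5)) as [Hsm|Hbig].
   + apply small_regime; auto.
   + apply large_regime; auto.
     * destruct (Req_dec s 0) as [E|E]. exfalso. unfold t in Hbig. rewrite E in Hbig. lra. lra.
     * fold t. lra.
     * intros i Hi. pose proof (Hy i Hi). pose proof (Rle_abs (th * Cc m i)). fold t. lra.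
Qed.

Definition Bd (th : R) (n : nat) := exp (th * mu n + phi (Rabs th * INR n)).

Lemma mg_bound th n : forall B, mg n th B <= Bd th n.
Proof.
 induction n as [n IH] using (well_founded_induction Wf_nat.lt_wf). intros B.
 destruct n as [|m].
 - eapply Rle_trans. apply mg_0. unfold Bd, phi. rewrite mu_0. simpl INR.
   rewrite Rmult_0_r, Rmult_0_r, exp_0. unfold AA. replace (0 + 1000 * (1 - 1 - 0)) with 0 by ring. rewrite exp_0. lra.
 - eapply Rle_trans. apply mg_rec.
   assert (Hn : 0 < INR (S m)) by (apply lt_0_INR; lia).
   apply Rle_trans with (exp (th * INR m) * / INR (S m) * sum_lt (fun i => Bd th i * Bd th (m - i)) (S m)).
   { apply Rmult_le_compat_l. apply Rmult_le_pos; [left; apply exp_pos| left; apply Rinv_0_lt_compat; auto].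
     apply sum_lt_le. intros i Hi. apply Rmult_le_compat; try apply mg_nonneg; apply IH; lia. }
   rewrite (sum_lt_ext (fun i => Bd th i * Bd th (m - i)) (fun i => exp (- (th * INR m)) * Bd th (S m) *
     exp (th * Cc m i + phi (Rabs th * INR i) + phi (Rabs th * INR (m - i)) - phi (Rabs th * INR (S m))))).
   2:{ intros i Hi. unfold Bd, Cc. rewrite <- !exp_plus. apply f_equal. ring. }
   rewrite sum_lt_scal. pose proof (core m th).
   replace (exp (th * INR m) * / INR (S m) * (exp (- (th * INR m)) * Bd th (S m) * sum_lt
      (fun i => exp (th * Cc m i + phi (Rabs th * INR i) + phi (Rabs th * INR (m - i)) - phi (Rabs th * INR (S m)))) (S m)))
   with (Bd th (S m) * (/ INR (S m) * sum_lt
      (fun i => exp (th * Cc m i + phi (Rabs th * INR i) + phi (Rabs th * INR (m - i)) - phi (Rabs th * INR (S m)))) (S m))).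
   2:{ rewrite exp_Ropp. pose proof (exp_pos (th * INR m)). field. repeat split; lra. }
   assert (/ INR (S m) * sum_lt (fun i => exp (th * Cc m i + phi (Rabs th * INR i) + phi (Rabs th * INR (m - i)) - phi (Rabs th * INR (S m)))) (S m) <= 1).
   { apply Rmult_le_reg_l with (INR (S m)); auto. rewrite <- Rmult_assoc, Rinv_r by lra. lra. }
   assert (0 < Bd th (S m)) by apply exp_pos. nra.
Qed.


Lemma tail_bound n eps s : 0 <= s ->
  qs_tail n eps <= exp (- (s * eps * mu n)) * (exp (- (s * mu n)) * mg n s (S (n * n)) + exp (s * mu n) * mg n (- s) (S (n * n))).
Proof. intros Hs. unfold qs_tail, mg.
 set (M := mu n).
 apply Rle_trans with (sum_lt (fun k => exp (- (s * eps * M)) * (exp (- (s * M)) * (qs_pmf n k * exp (s * INR k)))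
    + exp (- (s * eps * M)) * (exp (s * M) * (qs_pmf n k * exp (- s * INR k)))) (S (n * n))).
 - apply sum_lt_le. intros k Hk. pose proof (pmf_nonneg n k).
   assert (E1 : exp (- (s * eps * M)) * (exp (- (s * M)) * (qs_pmf n k * exp (s * INR k))) = qs_pmf n k * exp (s * (INR k - M) - s * eps * M)).
   { replace (s * (INR k - M) - s * eps * M) with (- (s * eps * M) + (- (s * M) + s * INR k)) by ring. rewrite !exp_plus. ring. }
   assert (E2 : exp (- (s * eps * M)) * (exp (s * M) * (qs_pmf n k * exp (- s * INR k))) = qs_pmf n k * exp (- s * (INR k - M) - s * eps * M)).
   { replace (- s * (INR k - M) - s * eps * M) with (- (s * eps * M) + (s * M + - s * INR k)) by ring. rewrite !exp_plus. ring. }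
   rewrite E1, E2.
   pose proof (exp_pos (s * (INR k - M) - s * eps * M)). pose proof (exp_pos (- s * (INR k - M) - s * eps * M)).
   destruct (Rle_dec (eps * M) (Rabs (INR k - M))) as [h|h].
   + unfold Rabs in h. destruct (Rcase_abs (INR k - M)).
     * assert (1 <= exp (- s * (INR k - M) - s * eps * M)) by (apply exp_ge1; nra). nra.
     * assert (1 <= exp (s * (INR k - M) - s * eps * M)) by (apply exp_ge1; nra). nra.
   + nra.
 - rewrite sum_lt_plus, !sum_lt_scal. lra. Qed.

Lemma ln_ge1 n : (3 <= n)%nat -> 1 <= ln (INR n).
Proof. intros H. assert (3 <= INR n) by (replace 3 with (INR 3) by (simpl; ring); apply le_INR; auto).
 pose proof exp_le_3. rewrite <- (ln_exp 1).
 destruct (Rle_lt_or_eq_dec _ _ H1) as [h|h].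
 - destruct (Rle_lt_or_eq_dec _ _ H0) as [h'|h'].
   + left. apply ln_increasing. apply exp_pos. lra.
   + left. apply ln_increasing. apply exp_pos. lra.
 - rewrite h. destruct (Rle_lt_or_eq_dec _ _ H0) as [h'|h']. left; apply ln_increasing; lra. rewrite h'; lra. Qed.

Lemma ln_mono x y : 0 < x -> x <= y -> ln x <= ln y.
Proof. intros H1 H2. destruct (Rle_lt_or_eq_dec _ _ H2). left; apply ln_increasing; auto. subst; lra. Qed.

Theorem corollary7p4 :
  forall eps : R, 0 < eps ->
  exists K : R, forall n : nat, (3 <= n)%nat ->
    qs_tail n eps <= Rpower (INR n) (- 2 * eps * ln (ln (INR n)) + K).
Proof.
 intros eps Heps. exists (4 * eps + AA + 1). intros n Hn.
 assert (Hn3 : 3 <= INR n) by (replace 3 with (INR 3) by (simpl; ring); apply le_INR; auto).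
 set (L := ln (INR n)). assert (HL : 1 <= L) by (apply ln_ge1; auto).
 set (lam := ln L).
 assert (Hlam0 : 0 <= lam) by (unfold lam; rewrite <- ln_1; apply ln_mono; lra).
 assert (Hlam1 : lam <= L - 1) by (apply ln_le_sub1; lra).
 set (s := lam / INR n).
 assert (Hs : 0 <= s) by (unfold s; apply Rmult_le_pos; [lra| left; apply Rinv_0_lt_compat; lra]).
 assert (Hsn : s * INR n = lam) by (unfold s; field; lra).
 eapply Rle_trans. apply (tail_bound n eps s Hs).
 pose proof (mg_bound s n (S (n * n))) as B1. pose proof (mg_bound (- s) n (S (n * n))) as B2.
 unfold Bd in B1, B2. rewrite Rabs_Ropp in B2. rewrite (Rabs_right s) in B1, B2 by lra.
 rewrite Hsn in B1, B2.
 set (P := phi lam) in *.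
 assert (HP : P <= AA * L).
 { unfold P, phi, lam. rewrite exp_ln by lra. fold lam. unfold AA. lra. }
 assert (Hmu : 2 * INR n * L - 4 * INR n <= mu n).
 { unfold qs_mean. pose proof (H_ge_ln n). pose proof (H_nonneg n).
   assert (L <= ln (INR (S n))) by (apply ln_mono; [lra| rewrite S_INR; lra]).
   rewrite S_INR. nra. }
 assert (Hsmu : lam * (2 * L - 4) <= s * mu n).
 { unfold s. apply Rmult_le_reg_r with (INR n). lra.
   replace (lam / INR n * mu n * INR n) with (lam * mu n) by (field; lra). nra. }
 assert (T1 : exp (- (s * mu n)) * mg n s (S (n * n)) <= exp P).
 { apply Rle_trans with (exp (- (s * mu n)) * exp (s * mu n + P)).
   apply Rmult_le_compat_l; [left; apply exp_pos| auto].
   rewrite <- exp_plus. apply exp_le_mono. lra. }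
 assert (T2 : exp (s * mu n) * mg n (- s) (S (n * n)) <= exp P).
 { apply Rle_trans with (exp (s * mu n) * exp (- s * mu n + P)).
   apply Rmult_le_compat_l; [left; apply exp_pos| auto].
   rewrite <- exp_plus. apply exp_le_mono. lra. }
 assert (Hexp : exp (- (s * eps * mu n)) * (exp P + exp P) <= exp (L + (- (s * eps * mu n) + P))).
 { rewrite !exp_plus. unfold L. rewrite exp_ln by lra. assert (0 < exp (- (s * eps * mu n)) * exp P) by (apply Rmult_lt_0_compat; apply exp_pos). nra. }
 apply Rle_trans with (exp (- (s * eps * mu n)) * (exp P + exp P)).
 { apply Rmult_le_compat_l. left; apply exp_pos. lra. }
 eapply Rle_trans. apply Hexp. unfold Rpower. apply exp_le_mono. fold L. fold lam.
 assert (eps * (lam * (2 * L - 4)) <= s * eps * mu n).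
 { replace (s * eps * mu n) with (eps * (s * mu n)) by ring. apply Rmult_le_compat_l; lra. }
 assert (0 <= eps * lam) by nra.
 assert (eps * lam <= eps * L) by nra.
 unfold AA in *. nra. Qed.
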